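(* In a Gibbs-type feature model with parameters $\alpha<1$, $\theta>-\alpha$ and weights $(V_{n,k})$, for every $n\ge1$ and $k\ge0$: if $\alpha<0$, $$P(K_n=k)=V_{n,k}\Big\{\frac{(\theta+\alpha)_n-(\theta)_n}{\alpha}\Big\}^k;$$ if $\alpha\in[0,1)$, $$P(K_n=k)=V_{n,k}\big\{g_n(\theta,\alpha)\,(\theta+1)_{n-1}\big\}^k,\qquad g_n(\theta,\alpha)=\sum_{i=1}^n\frac{(\theta+\alpha)_{i-1}}{(\theta+1)_{i-1}}.$$
   Context: Notation: $(x)_m=\Gamma(x+m)/\Gamma(x)$ (Pochhammer symbol); $[n]=\{1,\dots,n\}$. Individuals $i=1,2,\dots$ each display a finite (possibly empty) set of features, identified by almost surely distinct labels. For the sample $\mathbf Z^{(n)}=(Z_1,\dots,Z_n)$ of the first $n$ individuals, $K_n$ is the number of distinct features displayed, labelled $X_1,\dots,X_{K_n}$ in order of appearance; $A_{i,\ell}\in\{0,1\}$ indicates whether individual $i$ displays $X_\ell$, and $m_\ell=\sum_{i=1}^nA_{i,\ell}\in[n]$. The ordered feature allocation is $F_n=(B_{n,1},\dots,B_{n,K_n})$, $B_{n,\ell}=\{i\in[n]:A_{i,\ell}=1\}$. The model admits an exchangeable feature probability function (EFPF) if there are symmetric functions $\pi_n:\bigcup_{k\ge0}[n]^k\to[0,1]$ with $P(F_n=f_n)=\pi_n(m_1,\dots,m_k)$ for every ordered feature allocation $f_n$ of $[n]$ (a sequence of $k$ nonempty subsets of $[n]$ with sizes $m_1,\dots,m_k$),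 all orderings of the same collection of sets being equally likely; the laws for different $n$ are consistent. The model is a Gibbs-type feature model with parameters $\alpha<1$, $\theta>-\alpha$ if $\pi_n(m_1,\dots,m_k)=V_{n,k}\prod_{\ell=1}^k(1-\alpha)_{m_\ell-1}(\theta+\alpha)_{n-m_\ell}$ for nonnegative weights $(V_{n,k})_{n\ge1,k\ge0}$ satisfying $V_{n,k}=\sum_{j\ge0}\frac{(k+j)!}{j!\,k!}\{(\theta+\alpha)_n\}^j(\theta+n)^kV_{n+1,k+j}$. *)

(* Defs.v *)
From HB Require Import structures.
From mathcomp Require Import all_boot all_order all_algebra.
From mathcomp Require Import all_classical all_reals all_analysis.
Set Implicit Arguments. Unset Strict Implicit. Unset Printing Implicit Defensive.
Import Order.TTheory GRing.Theory Num.Theory.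
Import numFieldNormedType.Exports.
Local Open Scope classical_set_scope.
Local Open Scope ring_scope.

Definition poch {R : realType} (x : R) (m : nat) : R :=
  \prod_(i < m) (x + i%:R).

(* An ordered feature allocation of [n] with k features: a sequence of k
   nonempty subsets of [n] (represented by 'I_n). *)
Definition is_ofa (n k : nat) (f : k.-tuple {set 'I_n}) : bool :=
  all (fun B : {set 'I_n} => B != finset.set0) f.

Definition gibbs_efpf {R : realType} (alpha theta : R) (V : nat -> nat -> R)
    (n : nat) (ms : seq nat) : R :=
  V n (size ms) *
  \prod_(m <- ms) (poch (1 - alpha) (m - 1) * poch (theta + alpha) (n - m)).

Definition restrict_ofa (n : nat) (f : seq {set 'I_n.+1}) : seq {set 'I_n} :=
  seq.filter (fun B : {set 'I_n} => B != finset.set0)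
    (map (fun B : {set 'I_n.+1} => finset (fun i : 'I_n => widen_ord (leqnSn n) i \in B)) f).

(* P(K_n = k), where pF n k f = P(F_n = f) for f a k-tuple of subsets of [n]. *)
Definition prob_K {R : realType} (pF : forall n k : nat, k.-tuple {set 'I_n} -> R)
    (n k : nat) : R :=
  \sum_(f : k.-tuple {set 'I_n} | is_ofa f) pF n k f.

Definition gibbs_feature_model {R : realType} (alpha theta : R)
    (V : nat -> nat -> R) (pF : forall n k : nat, k.-tuple {set 'I_n} -> R) : Prop :=
      (forall n k, 0 <= V n k) /\
      (forall n k, (0 < n)%N ->
         (fun N : nat => \sum_(j < N)
            (((k + j)`!)%:R / ((j`!)%:R * (k`!)%:R)) *
            (poch (theta + alpha) n) ^+ j * (theta + n%:R) ^+ k * V n.+1 (k + j))%R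
         @ \oo --> V n k) /\
      (forall n k f, 0 <= pF n k f) /\
      (forall n k f, (0 < n)%N -> ~~ is_ofa f -> pF n k f = 0) /\
      (forall n, (0 < n)%N ->
         (fun N : nat => \sum_(k < N) \sum_(f : k.-tuple {set 'I_n}) pF n k f)
         @ \oo --> (1 : R)) /\
      (* consistency: the law of F_n is the marginal of the law of F_{n+1} *)
      (forall n k (f : k.-tuple {set 'I_n}), (0 < n)%N -> is_ofa f ->
         (fun N : nat => \sum_(k' < N)
            \sum_(f' : k'.-tuple {set 'I_n.+1} | is_ofa f' && (restrict_ofa f' == val f))
               pF n.+1 k' f')
         @ \oo --> pF n k f) /\
      (forall n k (f : k.-tuple {set 'I_n}), (0 < n)%N -> is_ofa f ->
         pF n k f = gibbs_efpf alpha theta V n (map (fun B : {set 'I_n} => #|B|) (val f))).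

(* Main.v *)
Require Import Defs.
From HB Require Import structures.
From mathcomp Require Import all_boot all_order all_algebra.
From mathcomp Require Import all_classical all_reals all_analysis.
From mathcomp Require Import ring lra.
Import Order.TTheory GRing.Theory Num.Theory.
Local Open Scope ring_scope.

Section Alg.
Variable R : realType.

Lemma poch0 (x : R) : poch x 0 = 1.
Proof. by rewrite /poch big_ord0. Qed.

Lemma pochS (x : R) m : poch x m.+1 = poch x m * (x + m%:R).
Proof. by rewrite /poch big_ord_recr. Qed.

Lemma vdm (x y : R) n : poch (x + y) n =
  \sum_(0 <= m < n.+1) 'C(n, m)%:R * poch x m * poch y (n - m).
Proof.
elim: n => [|n IH].
  by rewrite big_nat1 !poch0 bin0 mulr1 mulr1.
rewrite pochS IH big_distrl /=.
rewrite (@eq_big_nat _ _ _ 0 n.+1 _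
  (fun m => 'C(n, m)%:R * poch x m.+1 * poch y (n - m) +
            'C(n, m)%:R * poch x m * poch y (n.+1 - m))); last first.
  move=> m /andP[_ hm]; rewrite ltnS in hm.
  rewrite pochS (subSn hm) pochS natrB //; ring.
rewrite big_split /= [RHS]big_nat_recl // bin0 poch0 subn0 !mul1r.
under [X in _ = _ + X]eq_bigr do rewrite binS natrD subSS !mulrDl.
rewrite big_split /=.
have -> : \sum_(0 <= i < n.+1) 'C(n, i)%:R * poch x i * poch y (n.+1 - i) =
   poch y n.+1 + \sum_(0 <= i < n.+1) 'C(n, i.+1)%:R * poch x i.+1 * poch y (n.+1 - i.+1).
  rewrite big_nat_recl // bin0 poch0 subn0 !mul1r; congr (_ + _).
  by rewrite [RHS]big_nat_recr //= bin_small // mul0r mul0r addr0.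
ring.
Qed.

Definition U (a y : R) n :=
  \sum_(0 <= j < n) 'C(n, j.+1)%:R * poch a j * poch y (n - j.+1).

Lemma Urec (a y : R) n :
  U a y n.+1 = (a + y + n%:R - 1) * U a y n + poch y n.
Proof.
rewrite /U.
under eq_bigr do rewrite binS natrD subSS !mulrDl.
rewrite big_split /=.
have -> : \sum_(0 <= i < n.+1) 'C(n, i)%:R * poch a i * poch y (n - i) = poch (a + y) n
  by rewrite vdm.
rewrite big_nat_recr //= bin_small // !mul0r addr0.
rewrite (@eq_big_nat _ _ _ 0 n _
  (fun j => (a + y + n%:R - 1) * ('C(n, j.+1)%:R * poch a j * poch y (n - j.+1))
     - 'C(n, j.+1)%:R * poch a j.+1 * poch y (n - j.+1))); last first.
  move=> j /andP[_ hj].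
  have e : (n - j = (n - j.+1).+1)%N by rewrite -(subSn hj) subSS.
  rewrite e pochS pochS natrB // [(j.+1)%:R]mulrSr; ring.
rewrite sumrB -big_distrr /=.
have -> : \sum_(0 <= i < n) 'C(n, i.+1)%:R * poch a i.+1 * poch y (n - i.+1)
   = poch (a + y) n - poch y n.
  by rewrite vdm big_nat_recl // bin0 poch0 subn0 !mul1r addrC addKr.
ring.
Qed.

Lemma part1 (x y : R) n : x * U (x + 1) y n = poch (x + y) n - poch y n.
Proof.
elim: n => [|n IH]; first by rewrite /U big_geq // !poch0 mulr0 subrr.
rewrite Urec mulrDr mulrCA IH !pochS; ring.
Qed.
Lemma poch_gt0 (x : R) m : 0 < x -> 0 < poch x m.
Proof.
move=> hx; rewrite /poch; apply: prodr_gt0 => i _.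
by apply: (lt_le_trans hx); rewrite lerDl ler0n.
Qed.

Lemma part2 (al th : R) : 0 < th + 1 -> forall n,
  (\sum_(1 <= i < n.+2) poch (th + al) (i - 1) / poch (th + 1) (i - 1))
     * poch (th + 1) n = U (1 - al) (th + al) n.+1.
Proof.
move=> hth; elim=> [|n IH].
  by rewrite big_nat1 /U big_nat1 !poch0 bin1 divr1 !mulr1.
rewrite big_nat_recr // subSS subn0 mulrDl divfK; last first.
  by rewrite gt_eqF // poch_gt0.
rewrite pochS mulrA IH [RHS]Urec mulrSr; ring.
Qed.
End Alg.
Arguments U {R}. Arguments part1 {R}. Arguments part2 {R}.

Lemma sum_tuple_prod (R : realType) (T : finType) (F : T -> R) k :
  \sum_(t : k.-tuple T) \prod_(x <- t) F x = (\sum_x F x) ^+ k.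
Proof.
elim: k => [|k IH].
  rewrite (big_pred1 [tuple]) => [|t]; last by apply/esym/eqP/val_inj; case: t => -[].
  by rewrite big_nil expr0.
pose h (p : T * k.-tuple T) : k.+1.-tuple T := [tuple of p.1 :: p.2].
pose g (t : k.+1.-tuple T) : T * k.-tuple T := (thead t, [tuple of behead t]).
have bh : bijective h.
  exists g => [[x t]|t]; rewrite /g /h /=.
    by rewrite theadE; congr pair; apply: val_inj.
  by rewrite [RHS]tuple_eta.
rewrite (reindex h) /=; last by apply: onW_bij.
rewrite -(pair_big xpredT xpredT (fun x (t : k.-tuple T) => \prod_(y <- h (x, t)) F y)) /=.
under eq_bigr do under eq_bigr do rewrite big_cons.
rewrite exprS big_distrl /=; apply: eq_bigr => x _.
by rewrite -big_distrr IH.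
Qed.

Theorem theorem2 (R : realType) (alpha theta : R) (V : nat -> nat -> R)
    (pF : forall n k : nat, k.-tuple {set 'I_n} -> R) :
  alpha < 1 -> - alpha < theta ->
  gibbs_feature_model alpha theta V pF ->
  forall n k : nat, (1 <= n)%N ->
    (alpha < 0 ->
       prob_K pF n k =
       V n k * ((poch (theta + alpha) n - poch theta n) / alpha) ^+ k) /\
    (0 <= alpha ->
       prob_K pF n k =
       V n k * ((\sum_(1 <= i < n.+1)
                   poch (theta + alpha) (i - 1) / poch (theta + 1) (i - 1))
                * poch (theta + 1) (n - 1)) ^+ k).
Proof.
move=> ha hth [hV [_ [_ [_ [_ [_ hefpf]]]]]] n k hn.
have key : prob_K pF n k = V n k * (U (1 - alpha) (theta + alpha) n) ^+ k.
  pose w (m : nat) := poch (1 - alpha) (m - 1) * poch (theta + alpha) (n - m).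
  pose Fz (B : {set 'I_n}) := if B == finset.set0 then 0 else w #|B|.
  rewrite /prob_K.
  transitivity (\sum_(f : k.-tuple {set 'I_n}) V n k * \prod_(B <- f) Fz B).
    rewrite [RHS](bigID (fun f : k.-tuple {set 'I_n} => is_ofa f)) /= [X in _ = _ + X]big1 ?addr0.
      apply: eq_bigr => f hf.
      rewrite hefpf // /gibbs_efpf size_map size_tuple big_map; congr (_ * _).
      apply: eq_big_seq => B hB; rewrite /Fz.
      by have := allP hf B hB => /negbTE ->.
    move=> f hf; case/allPn: hf => B hB hB0.
    apply/eqP; rewrite mulf_eq0 prodf_seq_eq0; apply/orP; right.
    apply/hasP; exists B => //=; rewrite negbK in hB0.
    by rewrite /Fz hB0 eqxx.
  rewrite -big_distrr /= sum_tuple_prod; congr (_ * _ ^+ _).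
  rewrite (partition_big (fun B : {set 'I_n} => (inord #|B| : 'I_n.+1)) xpredT) //=.
  transitivity (\sum_(m < n.+1) 'C(n, m)%:R * (if (m : nat) == 0%N then 0 else w m)).
    apply: eq_bigr => m _.
    rewrite (eq_bigl (fun B => B \in [set B : {set 'I_n} | #|B| == m])); last first.
      move=> B; rewrite inE /=; apply/eqP/eqP => [<-|hB].
        rewrite inordK // ltnS; have := max_card B; by rewrite card_ord.
      by rewrite hB inord_val.
    rewrite (eq_bigr (fun _ => if (m : nat) == 0%N then 0 else w m)); last first.
      by move=> B; rewrite inE => /eqP hB; rewrite /Fz -cards_eq0 hB.
    by rewrite sumr_const card_draws card_ord mulr_natl.
  rewrite -(big_mkord xpredT (fun m => 'C(n, m)%:R * (if (m : nat) == 0%N then 0 else w m))).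
  rewrite big_nat_recl // eqxx mulr0 add0r /U.
  apply: eq_bigr => j _ /=; rewrite /w subSS subn0 mulrA.
  done.
split.
  move=> ha0; rewrite key; congr (_ * _ ^+ _).
  have h := part1 (-alpha) (theta + alpha) n.
  rewrite (_ : -alpha + 1 = 1 - alpha) in h; last by rewrite addrC.
  rewrite (_ : -alpha + (theta + alpha) = theta) in h; last by rewrite addrCA addNr addr0.
  have e : alpha * U (1 - alpha) (theta + alpha) n = poch (theta + alpha) n - poch theta n.
    by rewrite -[LHS]opprK -mulNr h opprB.
  have an0 : alpha != 0 by rewrite lt_eqF.
  by rewrite -e mulrC mulKf.
move=> ha0.
have ht1 : 0 < theta + 1 by lra.
case: n hn key => // n' _ key.
by rewrite key subSS subn0 part2.
Qed.
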